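(* Let $G$ be a strongly connected digraph with $n$ nodes. Then the burning number of $G$ is at most $\left\lceil \sqrt{2n+\tfrac14}-\tfrac12\right\rceil$. This bound is sharp: for every $n\ge1$ there is a strongly connected digraph on $n$ nodes whose burning number equals $\left\lceil \sqrt{2n+\tfrac14}-\tfrac12\right\rceil$.
   Context: Burning process on a digraph $D$: a sequence $(x_1,\ldots,x_b)$ of nodes is a burning sequence for $D$ if after $b$ steps of the following process every node of $D$ is burned; the $i$-th step consists of first burning all out-neighbours of all currently burned nodes, and then burning the node $x_i$. The burning number of $D$ is the length of a shortest burning sequence. Equivalently, with $N^+_k(v)$ the set of nodes reachable from $v$ by a directed path with at most $k$ arcs, the burning number is the least $b$ such that there are nodes $v_1,\ldots,v_b$ with $V(D)=\bigcup_{i=1}^b N^+_{i-1}(v_i)$. *)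

(* Defs.v *)
From mathcomp Require Import all_boot all_order all_algebra.
From mathcomp Require Import reals.
Set Implicit Arguments. Unset Strict Implicit. Unset Printing Implicit Defensive.
Import Order.TTheory GRing.Theory Num.Theory.

Definition reach_within (T : finType) (e : rel T) (k : nat) (v u : T) : Prop :=
  exists p : seq T, [/\ path e v p, last v p = u & size p <= k].

(* (x_1,...,x_b) is a burning sequence: V = \bigcup_i N^+_{i-1}(x_i)
   (0-based index i with radius i). *)
Definition burning_seq (T : finType) (e : rel T) (s : seq T) : Prop :=
  forall u : T, exists i : 'I_(size s), reach_within e i (nth u s i) u.

Definition is_burning_number (T : finType) (e : rel T) (b : nat) : Prop :=
  (exists s : seq T, size s = b /\ burning_seq e s) /\
  (forall s : seq T, burning_seq e s -> b <= size s).

Definition strongly_connected (T : finType) (e : rel T) : Prop :=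
  forall x y : T, connect e x y.

Definition burn_bound (R : realType) (n : nat) : int :=
  Num.ceil (Num.sqrt (2 * n%:R + 1 / 4 : R) - 1 / 2)%R.

(* Main.v *)
Require Import Defs.
From mathcomp Require Import all_boot all_order all_algebra.
From mathcomp Require Import reals.
From mathcomp Require Import zify ring lra.
Import Order.TTheory GRing.Theory Num.Theory.
Set Implicit Arguments. Unset Strict Implicit. Unset Printing Implicit Defensive.

Lemma bound_eq (R : realType) (n k : nat) :
  n.*2 <= k * k.+1 -> (forall j, j < k -> j * j.+1 < n.*2) ->
  burn_bound R n = Posz k.
Proof.
move=> H1 H2; rewrite /burn_bound; apply: ceil_def.
have s0 := @sqrtr_ge0 R (2 * n%:R + 1/4).
have s2 : (Num.sqrt (2 * n%:R + 1/4 : R) ^+ 2 = 2 * n%:R + 1/4)%R.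
  by rewrite sqr_sqrtr //; have := ler0n R n; lra.
move: s0 s2; set s := Num.sqrt _ => s0 s2.
have k0 := ler0n R k.
have H1' : (2 * n%:R <= k%:R * (k%:R + 1) :> R)%R.
  by move: H1; rewrite -(ler_nat R) -muln2 !natrM -natr1 mulrC; lra.
apply/andP; split; last first.
  rewrite -[((Posz k)%:~R)%R]/(k%:R)%R. nra.
case: k H1 H2 H1' k0 => [|k] H1 H2 H1' k0.
  rewrite /=. lra.
have H3' : (k%:R * (k%:R + 1) < 2 * n%:R :> R)%R.
  by move: (H2 k (ltnSn k)); rewrite -(ltr_nat R) -muln2 !natrM -natr1 mulrC; lra.
have -> : ((Posz k.+1 - 1)%:~R = k%:R :> R)%R.
  by rewrite -addn1 PoszD addrK.
have k0' := ler0n R k.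
rewrite -addn1 natrD in H1'.
nra.
Qed.

Lemma reach_mono (T : finType) (e : rel T) i j x y :
  reach_within e i x y -> i <= j -> reach_within e j x y.
Proof. by case=> p [pp lp sp] ij; exists p; split=> //; apply: leq_trans ij. Qed.

Section Tree.
Variables (T : finType) (e : rel T) (r : T) (par : T -> T) (dep : T -> nat).
Hypothesis dep_r : dep r = 0.
Hypothesis par_e : forall w, w != r -> e (par w) w.
Hypothesis par_dep : forall w, w != r -> (dep (par w)).+1 = dep w.

Lemma dep0 w : dep w = 0 -> w = r.
Proof. by move=> h; apply/eqP; apply/negPn/negP => /par_dep; rewrite h. Qed.

Lemma dep_iter j w : j <= dep w -> dep (iter j par w) = dep w - j.
Proof.
elim: j w => [|j IH] w h; first by rewrite subn0.
rewrite iterSr.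
have wr : w != r by apply/negP => /eqP wr; move: h; rewrite wr dep_r.
have := par_dep wr => hp.
rewrite IH; lia.
Qed.

Lemma reach_iter j w : j <= dep w -> reach_within e j (iter j par w) w.
Proof.
elim: j w => [|j IH] w h; first by exists [::].
rewrite iterSr.
have wr : w != r by apply/negP => /eqP wr; move: h; rewrite wr dep_r.
have := par_dep wr => hp.
have [p [pp lp sp]] := IH (par w) ltac:(lia).
exists (rcons p w); split.
- by rewrite rcons_path pp lp par_e.
- by rewrite last_rcons.
- by rewrite size_rcons.
Qed.

Lemma iter_root w : iter (dep w) par w = r.
Proof. by apply: dep0; rewrite dep_iter // subnn. Qed.

Lemma tree_burn k : forall A : {set T},
  (forall w, w \in A -> w != r -> par w \in A) -> (#|A|).*2 <= k * k.+1 ->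
  exists s : seq T, size s = k /\
    forall u, u \in A -> exists2 i, i < k & reach_within e i (nth r s i) u.
Proof.
elim: k => [|k IH] A Acl Acard.
  exists [::]; split=> // u uA.
  by move: Acard; rewrite (cardD1 u) uA.
have [A0|[u0 u0A]] := set_0Vmem A.
  by exists (nseq k.+1 r); split; [rewrite size_nseq | move=> u; rewrite A0 inE].
case: (@arg_maxnP _ u0 (mem A) dep u0A) => u uA umax.
have [small|big] := leqP (dep u) k.
  exists (nseq k.+1 r); split; first by rewrite size_nseq.
  move=> w wA; exists k => //; rewrite nth_nseq ltnSn.
  apply: reach_mono (leq_trans (umax w wA) small).
  by rewrite -{1}(iter_root w); apply: reach_iter.
pose v := iter k par u.
have dv : dep v = dep u - k by rewrite dep_iter //; lia.
pose S := [set w in A | (dep v <= dep w) && (iter (dep w - dep v) par w == v)].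
pose A' := A :\: S.
have SA : S \subset A by apply/subsetP => w; rewrite inE => /andP[].
have ancA : forall j, j <= dep u -> iter j par u \in A.
  elim=> [|j IHj] hj //; rewrite iterS; apply: Acl; first by apply: IHj; lia.
  apply/negP => /eqP h; have := dep_iter (ltnW hj); rewrite h dep_r; lia.
have ancS : forall j, j <= k -> iter j par u \in S.
  move=> j hj; rewrite inE ancA /=; last by lia.
  rewrite dep_iter; last by lia.
  rewrite dv; apply/andP; split; first by lia.
  rewrite -iterD; apply/eqP; congr iter; lia.
have cardS : k.+1 <= #|S|.
  pose l := [seq iter j par u | j <- iota 0 k.+1].
  have ul : uniq l.
    apply: (@map_uniq _ _ dep).
    have -> : map dep l = map (fun j => dep u - j) (iota 0 k.+1).
      rewrite -map_comp; apply/eq_in_map => j.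
      by rewrite mem_iota /= => hj; rewrite dep_iter //; lia.
    rewrite map_inj_in_uniq ?iota_uniq // => i j.
    rewrite !mem_iota => hi hj; lia.
  have := uniq_leq_size ul (_ : {subset l <= enum S}).
  rewrite size_map size_iota cardE; apply.
  by move=> x /mapP [j]; rewrite mem_iota mem_enum => hj ->; apply: ancS; lia.
have A'cl : forall w, w \in A' -> w != r -> par w \in A'.
  move=> w; rewrite inE => /andP[wS wA] wr.
  rewrite inE Acl // andbT; apply/negP => pS; move/negP: wS; apply.
  move: pS; rewrite !inE wA => /andP[pA /andP[h1 /eqP h2]].
  have := par_dep wr => hp.
  apply/andP; split; first by lia.
  have -> : dep w - dep v = (dep (par w) - dep v).+1 by lia.
  by rewrite iterSr h2 eqxx andbT; lia.
have A'card : (#|A'|).*2 <= k * k.+1.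
  have : #|A'| = #|A| - #|S| by rewrite cardsD (setIidPr SA).
  have : #|S| <= #|A| by apply: subset_leq_card.
  lia.
have [s' [ss' hs']] := IH A' A'cl A'card.
exists (rcons s' v); split; first by rewrite size_rcons ss'.
move=> w wA.
case wS: (w \in S).
  exists k => //; rewrite nth_rcons ss' ltnn eqxx.
  move: wS; rewrite inE wA /= => /andP[h1 /eqP h2].
  have := umax w wA => h3.
  apply: (@reach_mono _ _ (dep w - dep v)); last by lia.
  by have := @reach_iter (dep w - dep v) w ltac:(lia); rewrite h2.
have [i ik hi] := hs' w ltac:(by rewrite inE wS wA).
exists i; first by lia.
by rewrite nth_rcons ss' ik.
Qed.

End Tree.

Lemma tree_exists (T : finType) (e : rel T) r : (forall w, connect e r w) ->
  exists par : T -> T, exists dep : T -> nat, [/\ dep r = 0,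
    forall w, w != r -> e (par w) w &
    forall w, w != r -> (dep (par w)).+1 = dep w].
Proof.
move=> Hc.
have Pex w : exists m, [exists t : m.-tuple T, path e r t && (last r t == w)].
  case/connectP: (Hc w) => p pp ->; exists (size p).
  by apply/existsP; exists (in_tuple p); rewrite /= pp eqxx.
pose dep w := ex_minn (Pex w).
have dep_le : forall w p, path e r p -> last r p = w -> dep w <= size p.
  move=> w p pp lp; rewrite /dep; case: ex_minnP => m _ hm; apply: hm.
  by apply/existsP; exists (in_tuple p); rewrite /= pp lp eqxx.
have dep_ex : forall w, exists p, [/\ path e r p, last r p = w & size p = dep w].
  move=> w; rewrite /dep; case: ex_minnP => m /existsP [t /andP [pt /eqP lt]] _.
  by exists t; rewrite size_tuple.
have dep_r : dep r = 0 by apply/eqP; rewrite -leqn0; exact: (dep_le r [::]).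
clearbody dep.
have hpar : forall w, w != r -> exists q, e q w && ((dep q).+1 == dep w).
  move=> w wr; have [p [pp lp sp]] := dep_ex w.
  case/lastP: p pp lp sp => [|p x] pp lp sp; first by move: wr; rewrite -lp eqxx.
  rewrite last_rcons in lp; subst x.
  rewrite rcons_path in pp; case/andP: pp => pp epw.
  exists (last r p); rewrite epw /=.
  have h1 := dep_le _ _ pp erefl.
  have [p' [pp' lp' sp']] := dep_ex (last r p).
  have h2 := dep_le w (rcons p' w); rewrite rcons_path pp' lp' last_rcons size_rcons in h2.
  have h3 := h2 epw erefl.
  rewrite size_rcons in sp; apply/eqP; lia.
exists (fun w => odflt r [pick q | e q w && ((dep q).+1 == dep w)]), dep.
split=> // w wr; case: pickP => [q /andP [h1 /eqP h2] //|none] /=;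
  by case: (hpar w wr) => q; rewrite none.
Qed.

Lemma burn_from_tree (T : finType) (e : rel T) r : (forall w, connect e r w) ->
  forall k, #|T|.*2 <= k * k.+1 -> exists s, size s = k /\ burning_seq e s.
Proof.
move=> Hc k hk.
have [par [dep [h1 h2 h3]]] := tree_exists Hc.
have := @tree_burn T e r par dep h1 h2 h3 k [set: T] (fun w _ _ => in_setT _).
rewrite cardsT => /(_ hk) [s [ss hs]].
exists s; split=> // u.
have [i ik hi] := hs u (in_setT u).
have ik' : i < size s by rewrite ss.
by exists (Ordinal ik'); rewrite /= (set_nth_default r).
Qed.

Lemma reach_fun (T : finType) (e : rel T) f : (forall a b, e a b -> b = f a) ->
  forall k x u, reach_within e k x u -> exists2 j, j <= k & u = iter j f x.
Proof.
move=> He k x u [p [pp lp sp]].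
elim: p x k pp lp sp => [|y p IH] x k /=; first by move=> _ <- _; exists 0.
case/andP=> exy pp lp sp.
have := He _ _ exy => fy; subst y.
have [j jk ->] := IH (f x) k.-1 pp lp ltac:(lia).
by exists j.+1; [lia | rewrite iterSr].
Qed.

Fixpoint balls (T : Type) (f : T -> T) (m : nat) (s : seq T) : seq T :=
  match s with
  | [::] => [::]
  | x :: s' => [seq iter j f x | j <- iota 0 m.+1] ++ balls f m.+1 s'
  end.

Lemma size_balls (T : Type) (f : T -> T) s : forall m,
  (size (balls f m s)).*2 + m * m.+1 = (m + size s) * (m + size s).+1.
Proof.
elim: s => [|x s IH] m /=; first by rewrite addn0.
rewrite size_cat size_map size_iota.
have := IH m.+1; lia.
Qed.

Lemma mem_balls (T : eqType) (f : T -> T) x0 s : forall m i j,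
  i < size s -> j <= m + i -> iter j f (nth x0 s i) \in balls f m s.
Proof.
elim: s => [|x s IH] m i j // hi hj.
change (balls f m (x::s)) with ([seq iter k f x | k <- iota 0 m.+1] ++ balls f m.+1 s).
rewrite mem_cat; case: i hi hj => [|i] hi hj.
  by apply/orP; left; apply: (map_f (fun k => iter k f x)); rewrite mem_iota; lia.
by apply/orP; right; apply: (IH m.+1 i j); rewrite /= in hi; lia.
Qed.

Lemma fun_lower (T : finType) (e : rel T) f : (forall a b, e a b -> b = f a) ->
  forall s, burning_seq e s -> #|T|.*2 <= size s * (size s).+1.
Proof.
move=> He s hs.
have : #|T| <= size (balls f 0 s).
  apply: (leq_trans _ (card_size (balls f 0 s))); apply: subset_leq_card.
  apply/subsetP => u _.
  have [i hi] := hs u.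
  have [j ji ->] := reach_fun He hi.
  by apply: mem_balls => //; rewrite add0n.
have := size_balls f s 0; lia.
Qed.

Section Cycle.
Variable m : nat.
Definition cyc (i : 'I_m.+1) : 'I_m.+1 := if i < m then inord i.+1 else ord0.
Definition cyce : rel 'I_m.+1 := [rel i j | j == cyc i].

Lemma cyc_val j (x : 'I_m.+1) : x + j <= m -> val (iter j cyc x) = x + j.
Proof.
elim: j => [|j IH] h; first by rewrite addn0.
rewrite iterS /cyc IH; last by lia.
have -> : (x + j < m) = true by apply/idP; lia.
by rewrite /= inordK; lia.
Qed.

Lemma cyc_connect_iter j x : connect cyce x (iter j cyc x).
Proof.
elim: j => [|j IH]; first exact: connect0.
apply: (connect_trans IH); apply: connect1; exact: eqxx.
Qed.

Lemma cyc_sc : strongly_connected cyce.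
Proof.
move=> x y.
have h0 : iter (m - x).+1 cyc x = ord0.
  rewrite iterS /cyc cyc_val; last by have := ltn_ord x; lia.
  by have -> : (x + (m - x) < m) = false by apply/negbTE; have := ltn_ord x; lia.
have hy : iter y cyc ord0 = y.
  by apply: val_inj; rewrite cyc_val //= add0n; have := ltn_ord y; lia.
apply: (connect_trans (cyc_connect_iter (m - x).+1 x)).
by rewrite h0 -[X in connect _ _ X]hy; apply: cyc_connect_iter.
Qed.

End Cycle.

Theorem mainTheorem7 (R : realType) :
  (forall (T : finType) (e : rel T), strongly_connected e ->
     forall b : nat, is_burning_number e b -> (Posz b <= burn_bound R #|T|)%R)
  /\
  (forall n : nat, 0 < n ->
     exists (T : finType) (e : rel T), [/\ #|T| = n, strongly_connected e &
       exists b : nat, is_burning_number e b /\ Posz b = burn_bound R n]).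
Proof.
have kex : forall n, exists k, n.*2 <= k * k.+1.
  by move=> n; exists n; nia.
split.
  move=> T e sc b [_ bmin].
  case: (ex_minnP (kex #|T|)) => k hk kmin.
  rewrite (@bound_eq R #|T| k hk); last first.
    by move=> j jk; rewrite ltnNge; apply/negP => /kmin; lia.
  rewrite lez_nat.
  case: (pickP (@predT T)) => [r _ | none].
    have [s [ss bs]] := burn_from_tree (sc r) hk.
    by rewrite -ss; apply: bmin.
  have : b <= size ([::] : seq T) by apply: bmin => u; have := none u.
  by rewrite /=; lia.
move=> [//|m] _.
exists 'I_m.+1, (@cyce m); split; [exact: card_ord | exact: cyc_sc |].
case: (ex_minnP (kex m.+1)) => k hk kmin.
exists k; split; last first.
  apply/esym/bound_eq => // j jk; rewrite ltnNge; apply/negP => /kmin; lia.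
split.
  have hk' : #|'I_m.+1|.*2 <= k * k.+1 by rewrite card_ord.
  have [s [ss bs]] := burn_from_tree (cyc_sc (ord0 : 'I_m.+1)) hk'.
  by exists s.
move=> s bs; apply: kmin.
have := @fun_lower _ (@cyce m) (@cyc m) (fun a b => @eqP _ b (cyc a)) s bs.
by rewrite card_ord.
Qed.
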